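(* Let $\mathbf{\Sigma}$ be a cluster pattern of rank $n$ with free coefficients at $t_0$. Then the seed $\Sigma_t$ is coprime for every $t\in\mathbb{T}_n$.
   Context: A semifield is a multiplicative abelian group with a commutative, associative addition $\oplus$ satisfying $(a\oplus b)c=ac\oplus bc$. For formal variables $\mathbf{y}=(y_1,\dots,y_n)$, the universal semifield $\mathbb{Q}_{\mathrm{sf}}(\mathbf{y})$ consists of rational functions expressible as ratios of nonzero polynomials with nonnegative integer coefficients. A seed with coefficients in a semifield $\mathbb{P}$ is $(\mathbf{x},\mathbf{y},B)$ with $\mathbf{x}$ a generating transcendence basis of an ambient field $\mathcal{F}\cong\mathbb{Q}\mathbb{P}(u_1,\dots,u_n)$ over the fraction field $\mathbb{Q}\mathbb{P}$ of the group ring $\mathbb{Z}\mathbb{P}$, $\mathbf{y}\in\mathbb{P}^n$, $B$ an $n\times n$ skew-symmetrizable integer matrix. With $[a]_+=\max(a,0)$ and $\hat y_i=y_i\prod_jx_j^{b_{ji}}$, the mutation $\mu_k$ is: $x'_k=x_k^{-1}\big(\prod_{j}x_j^{[-b_{jk}]_+}\big)\frac{1+\hat y_k}{1\oplus y_k}$, $x'_i=x_i$ ($i\ne k$); $y'_k=y_k^{-1}$, $y'_i=y_iy_k^{[b_{ki}]_+}(1\oplus y_k)^{-b_{ki}}$ ($i\neq k$); $b'_{ij}=-b_{ij}$ if $i=k$ or $j=k$, and $b'_{ij}=b_{ij}+b_{ik}[b_{kj}]_++[-b_{ik}]_+b_{kj}$ otherwise. $\mathbb{T}_n$ is the $n$-regular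 tree with edges labeled $1,\dots,n$, distinct at each vertex. A cluster pattern is $\{\Sigma_t=(\mathbf{x}_t,\mathbf{y}_t,B_t)\}_{t\in\mathbb{T}_n}$ with $\Sigma_{t'}=\mu_k(\Sigma_t)$ whenever $t,t'$ are joined by an edge labeled $k$. It has free coefficients at $t_0$ if its coefficient semifield is $\mathbb{Q}_{\mathrm{sf}}(\mathbf{y})$ and $\mathbf{y}_{t_0}=\mathbf{y}$. For a seed $\Sigma_t$ and $k=1,\dots,n$, let $P_{k;t}=\frac{1}{1\oplus y_{k;t}}\big(y_{k;t}\prod_jx_{j;t}^{[b_{jk;t}]_+}+\prod_jx_{j;t}^{[-b_{jk;t}]_+}\big)\in\mathbb{Z}\mathbb{P}[\mathbf{x}_t]$. The seed $\Sigma_t$ is coprime if $P_{1;t},\dots,P_{n;t}$ are pairwise coprime in $\mathbb{Z}\mathbb{P}[\mathbf{x}_t]$, i.e. any common factor of $P_{i;t}$ and $P_{j;t}$ ($i\ne j$) lies in $\mathbb{Z}\mathbb{P}^{\times}=\{\pm1\}\mathbb{P}$. *)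

(* Defs.v *)
From HB Require Import structures.
From mathcomp Require Import all_boot all_order all_algebra fraction.
From mathcomp Require Import finmap.
From mathcomp Require Import monalg.
From mathcomp Require Import mpoly.
From Stdlib Require Import ClassicalEpsilon.
Notation "x %:F" := (@FracField.tofrac _ x).
Set Implicit Arguments. Unset Strict Implicit. Unset Printing Implicit Defensive.
Import GRing.Theory Num.Theory.
Local Open Scope ring_scope.

Section GroupRing.
Local Open Scope fset_scope.
Variable (K : choiceType) (one : K) (mul : K -> K -> K).
Hypotheses (mulA : associative mul) (mul1 : left_id one mul) (mulC : commutative mul).
Lemma mulr1' : right_id one mul. Proof. by move=> x; rewrite mulC mul1. Qed.

Definition grp_ring (_ : associative mul) (_ : left_id one mul)
  (_ : commutative mul) := monalg.malg K int.
Local Notation GR := (grp_ring mulA mul1 mulC).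
HB.instance Definition _ := GRing.Zmodule.copy GR (monalg.malg K int).

Local Notation "<< z *g k >>" := (monalg.mkmalgU k z).
Local Notation "g @@_ k" := (monalg.mcoeff k g) (at level 3, k at level 2).
Implicit Types (g : GR).

Definition gone : GR := << 1 *g one >>.
Definition gmul g1 g2 : GR :=
  \sum_(k1 <- monalg.msupp g1) \sum_(k2 <- monalg.msupp g2)
     << g1@@_k1 * g2@@_k2 *g mul k1 k2 >>.

Lemma gmullw (d1 d2 : {fset K}) g1 g2 :
  monalg.msupp g1 `<=` d1 -> monalg.msupp g2 `<=` d2 ->
  gmul g1 g2 = \sum_(k1 <- d1) \sum_(k2 <- d2) << g1@@_k1 * g2@@_k2 *g mul k1 k2 >>.
Proof.
move=> le_d1 le_d2; rewrite /gmul (big_fset_incl _ le_d1) /=.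
  apply/eq_bigr=> k1 _; apply/big_fset_incl => // k _ /monalg.mcoeff_outdom ->.
  by rewrite mulr0 monalg.monalgU0.
move=> k _ /monalg.mcoeff_outdom g1k.
by rewrite big1 => // k' _; rewrite g1k mul0r monalg.monalgU0.
Qed.

Lemma gmulrw (d1 d2 : {fset K}) g1 g2 :
  monalg.msupp g1 `<=` d1 -> monalg.msupp g2 `<=` d2 ->
  gmul g1 g2 = \sum_(k2 <- d2) \sum_(k1 <- d1) << g1@@_k1 * g2@@_k2 *g mul k1 k2 >>.
Proof. by move=> le_d1 le_d2; rewrite (gmullw le_d1 le_d2) exchange_big. Qed.

Lemma gmul0g : left_zero 0 gmul.
Proof. by move=> g; rewrite /gmul monalg.msupp0 big_seq_fset0. Qed.
Lemma gmulg0 : right_zero 0 gmul.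
Proof. by move=> g; rewrite /gmul exchange_big monalg.msupp0 big_seq_fset0. Qed.

Lemma gmulUg c k g :
  gmul << c *g k >> g = \sum_(k' <- monalg.msupp g) << c * g@@_k' *g mul k k' >>.
Proof.
rewrite (gmullw monalg.msuppU_le (fsubset_refl _)) big_seq_fset1.
by apply/eq_bigr => k' _; rewrite monalg.mcoeffUU.
Qed.

Lemma gmulgU c k g :
  gmul g << c *g k >> = \sum_(k' <- monalg.msupp g) << g@@_k' * c *g mul k' k >>.
Proof.
rewrite (gmulrw (fsubset_refl _) monalg.msuppU_le) big_seq_fset1.
by apply/eq_bigr=> k' _; rewrite monalg.mcoeffUU.
Qed.

Lemma gmulUU c1 c2 k1 k2 :
  gmul << c1 *g k1 >> << c2 *g k2 >> = << c1 * c2 *g mul k1 k2 >>.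
Proof. by rewrite (gmulrw monalg.msuppU_le monalg.msuppU_le) !big_seq_fset1 !monalg.mcoeffUU. Qed.

Lemma gmulEl1 g1 g2 :
  gmul g1 g2 = \sum_(k1 <- monalg.msupp g1) gmul << g1@@_k1 *g k1 >> g2.
Proof. by apply/eq_bigr=> k _; rewrite gmulUg. Qed.

Lemma gmulEr1 g1 g2 :
  gmul g1 g2 = \sum_(k2 <- monalg.msupp g2) gmul g1 << g2@@_k2 *g k2 >>.
Proof.
rewrite [LHS]/gmul exchange_big; apply/eq_bigr=> k _; rewrite gmulgU.
by apply/eq_bigr=> k' _.
Qed.

Lemma gmul1g : left_id gone gmul.
Proof.
move=> g; rewrite gmulUg [RHS]monalg.monalgE.
by apply/eq_bigr=> kg _; rewrite mul1r mul1.
Qed.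

Lemma gmulg1 : right_id gone gmul.
Proof.
move=> g; rewrite gmulgU [RHS]monalg.monalgE.
by apply/eq_bigr=> k _; rewrite mulr1 mulr1'.
Qed.

Lemma gmulgDl : left_distributive gmul +%R.
Proof.
move=> g1 g2 g; rewrite [in RHS](gmullw (fsubsetUl _ (monalg.msupp g2)) (fsubset_refl _)).
rewrite [in RHS](gmullw (fsubsetUr (monalg.msupp g1) _) (fsubset_refl _)).
rewrite (gmullw (monalg.msuppD_le _ _) (fsubset_refl _)).
rewrite -big_split /=; apply/eq_bigr=> k1 _.
rewrite -big_split /=; apply/eq_bigr=> k2 _.
by rewrite monalg.mcoeffD mulrDl monalg.monalgUD.
Qed.

Lemma gmulgDr : right_distributive gmul +%R.
Proof.
move=> g g1 g2; rewrite [in RHS](gmulrw (fsubset_refl _) (fsubsetUl _ (monalg.msupp g2))).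
rewrite [in RHS](gmulrw (fsubset_refl _) (fsubsetUr (monalg.msupp g1) _)).
rewrite (gmulrw (fsubset_refl _) (monalg.msuppD_le _ _)).
rewrite -big_split /=; apply/eq_bigr => k1 _.
rewrite -big_split /=; apply/eq_bigr => k2 _.
by rewrite monalg.mcoeffD mulrDr monalg.monalgUD.
Qed.

Lemma gmulA : associative gmul.
Proof.
move=> g1 g2 g3.
rewrite [RHS](big_morph (gmul^~ _) (fun _ _ => gmulgDl _ _ _) (gmul0g _)).
rewrite gmulEl1; apply/eq_bigr=> k1 _.
rewrite [LHS](big_morph (gmul _) (fun _ _ => gmulgDr _ _ _) (gmulg0 _)).
rewrite [RHS](big_morph (gmul^~ _) (fun _ _ => gmulgDl _ _ _) (gmul0g _)).
apply/eq_bigr=> k2 _.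
rewrite [LHS](big_morph (gmul _) (fun _ _ => gmulgDr _ _ _) (gmulg0 _)).
by rewrite gmulEr1; apply/eq_bigr=> k3 _; rewrite !gmulUU mulrA mulA.
Qed.

Lemma goner_eq0 : gone != 0.
Proof.
apply/eqP => /(congr1 (monalg.mcoeff one)).
by rewrite monalg.mcoeffUU monalg.mcoeff0 => /eqP; rewrite oner_eq0.
Qed.

HB.instance Definition _ := GRing.Zmodule_isRing.Build GR
  gmulA gmul1g gmulg1 gmulgDl gmulgDr goner_eq0.

Lemma gmulC : commutative gmul.
Proof.
move=> g1 g2; rewrite /gmul exchange_big; apply/eq_bigr=> k1 _; apply/eq_bigr=> k2 _.
by rewrite mulrC mulC.
Qed.

HB.instance Definition _ := GRing.Ring_hasCommutativeMul.Build GR gmulC.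

End GroupRing.

Definition Qy (n : nat) := {fraction (mpoly.mpoly n rat)}.

Definition natcoef (n : nat) (p : mpoly.mpoly n rat) : Prop :=
  forall m : 'X_{1..n}, mpoly.mcoeff m p \is a Num.nat.

Lemma natcoef1 (n : nat) : natcoef (1 : mpoly.mpoly n rat).
Proof. by move=> m; rewrite mpoly.mcoeff1 natr_nat. Qed.

Lemma natcoefM (n : nat) (p q : mpoly.mpoly n rat) :
  natcoef p -> natcoef q -> natcoef (p * q).
Proof.
move=> hp hq m; rewrite mpoly.mcoeffM rpred_sum // => k _.
exact: rpredM.
Qed.

Definition subtraction_free (n : nat) (f : Qy n) : Prop :=
  exists p q : mpoly.mpoly n rat,
    [/\ natcoef p, natcoef q,
        p != 0, q != 0 & f = (p%:F) / (q%:F)].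

Definition is_sf (n : nat) (f : Qy n) : bool :=
  if excluded_middle_informative (subtraction_free f) then true else false.

Lemma is_sfP (n : nat) (f : Qy n) : reflect (subtraction_free f) (is_sf f).
Proof.
rewrite /is_sf; case: excluded_middle_informative => h; [left|right]; exact: h.
Qed.

Definition Qsf (n : nat) := {f : Qy n | is_sf f}.

Lemma sf1 (n : nat) : is_sf (1 : Qy n).
Proof.
apply/is_sfP; exists 1, 1; split; rewrite ?oner_eq0 //; try exact: natcoef1.
by rewrite rmorph1 divr1.
Qed.

Lemma sfM (n : nat) (f g : Qy n) : is_sf f -> is_sf g -> is_sf (f * g).
Proof.
move=> /is_sfP [p1 [q1 [Hp1 Hq1 p10 q10 ->]]] /is_sfP [p2 [q2 [Hp2 Hq2 p20 q20 ->]]].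
apply/is_sfP; exists (p1 * p2), (q1 * q2); split; rewrite ?mulf_neq0 //;
  try exact: natcoefM.
by rewrite !rmorphM invfM mulrACA.
Qed.

Definition sf_one (n : nat) : Qsf n := exist _ 1 (sf1 n).
Definition sf_mul (n : nat) (a b : Qsf n) : Qsf n :=
  exist _ (val a * val b) (sfM (valP a) (valP b)).

Lemma sf_mulA (n : nat) : associative (@sf_mul n).
Proof. by move=> a b c; apply: val_inj; rewrite /= mulrA. Qed.
Lemma sf_mul1 (n : nat) : left_id (sf_one n) (@sf_mul n).
Proof. by move=> a; apply: val_inj; rewrite /= mul1r. Qed.
Lemma sf_mulC (n : nat) : commutative (@sf_mul n).
Proof. by move=> a b; apply: val_inj; rewrite /= mulrC. Qed.

(* Elements of Q(y) known to lie in Q_sf(y) are cast into Qsf with [toSf]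
   (all uses below are on genuinely subtraction-free expressions: products,
   quotients, integer powers and sums of elements of Q_sf(y)). *)
Definition toSf (n : nat) (f : Qy n) : Qsf n := insubd (sf_one n) f.

Definition ygen (n : nat) (i : 'I_n) : Qsf n := toSf ((mpoly.mpolyX rat U_(i)%MM)%:F).

Definition ZP (n : nat) : comNzRingType :=
  @grp_ring (Qsf n) (sf_one n) (@sf_mul n) (@sf_mulA n) (@sf_mul1 n) (@sf_mulC n).
Definition ZPx (n : nat) := mpoly.mpoly n (ZP n).

Definition grp (n : nat) (p : Qsf n) : ZP n := monalg.mkmalgU p 1.

Definition posi (a : int) : int := Num.max a 0.
Definition posn (a : int) : nat := if a is Posz m then m else 0%N.

Record yseed (n : nat) := YSeed { yv : 'I_n -> Qsf n ; Bm : 'M[int]_n }.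

Definition skew_symmetrizable (n : nat) (B : 'M[int]_n) : Prop :=
  exists d : 'I_n -> nat, (forall i, (0 < d i)%N) /\
    forall i j, (d i)%:Z * B i j = - ((d j)%:Z * B j i).

(* semifield operations of Q_sf(y): multiplication and + of Q(y) *)
Definition mut_y (n : nat) (k : 'I_n) (y : 'I_n -> Qsf n) (B : 'M[int]_n) :
    'I_n -> Qsf n :=
  fun i => if i == k then toSf ((val (y k))^-1)
           else toSf (val (y i) * (val (y k)) ^ posi (B k i)
                      * (1 + val (y k)) ^ (- B k i)).

Definition mut_B (n : nat) (k : 'I_n) (B : 'M[int]_n) : 'M[int]_n :=
  \matrix_(i, j) if (i == k) || (j == k) then - B i j
                 else B i j + B i k * posi (B k j) + posi (- B i k) * B k j.

Definition mutate (n : nat) (k : 'I_n) (s : yseed n) : yseed n :=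
  YSeed (mut_y k (yv s) (Bm s)) (mut_B k (Bm s)).

(* The n-regular tree T_n: vertices are the reduced words over 'I_n (no two *)
(* consecutive equal letters), t0 = [::]; for every reduced word rcons w k   *)
(* there is an edge labelled k between w and rcons w k, and these are all    *)
(* the edges.                                                               *)

Definition reduced_word (n : nat) (w : seq 'I_n) : bool :=
  sorted (fun a b : 'I_n => a != b) w.

Definition is_pattern (n : nat) (S : seq 'I_n -> yseed n) : Prop :=
  (forall t, reduced_word t -> skew_symmetrizable (Bm (S t))) /\
  (forall (t : seq 'I_n) (k : 'I_n), reduced_word (rcons t k) ->
      S (rcons t k) = mutate k (S t) /\ S t = mutate k (S (rcons t k))).

Definition free_coeffs_at_t0 (n : nat) (S : seq 'I_n -> yseed n) : Prop :=
  forall i, yv (S [::]) i = ygen i.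

Definition mono_pos (n : nat) (B : 'M[int]_n) (k : 'I_n) : 'X_{1..n} :=
  [multinom posn (B j k) | j < n].
Definition mono_neg (n : nat) (B : 'M[int]_n) (k : 'I_n) : 'X_{1..n} :=
  [multinom posn (- B j k) | j < n].

(* P_k = 1/(1 (+) y_k) * (y_k * prod_j x_j^[b_jk]_+ + prod_j x_j^[-b_jk]_+) *)
Definition exch_poly (n : nat) (s : yseed n) (k : 'I_n) : ZPx n :=
  let y := val (yv s k) in
  mpoly.mpolyC n (grp (toSf (y / (1 + y)))) * 'X_[mono_pos (Bm s) k]
  + mpoly.mpolyC n (grp (toSf (1 / (1 + y)))) * 'X_[mono_neg (Bm s) k].

(* units of Z[P]: {+-1} P, viewed as constant polynomials *)
Definition is_ZP_unit_const (n : nat) (d : ZPx n) : Prop :=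
  exists (e : bool) (p : Qsf n), d = mpoly.mpolyC n ((-1) ^+ e * grp p).

Definition coprime_seed (n : nat) (s : yseed n) : Prop :=
  forall i j : 'I_n, i != j -> forall d : ZPx n,
    (exists a, exch_poly s i = d * a) -> (exists b, exch_poly s j = d * b) ->
    is_ZP_unit_const d.

(* Main.v *)
Require Import Defs.
From HB Require Import structures.
From mathcomp Require Import all_boot all_order all_algebra fraction.
From mathcomp Require Import finmap monalg mpoly.
From mathcomp Require Import zify ring.
From Stdlib Require Import ClassicalEpsilon FunctionalExtensionality.
Set Implicit Arguments. Unset Strict Implicit. Unset Printing Implicit Defensive.
Import Order.TTheory GRing.Theory Num.Theory.
Local Open Scope ring_scope.

Module E.
Local Open Scope ring_scope.
Section Eval.
Variable n : nat.
Implicit Types (p q : mpoly.mpoly n rat) (f g : Qy n) (r : 'I_n -> rat).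

Definition pospt r := forall i, 0 < r i.

Lemma natcoef_ge0 p r : natcoef p -> pospt r -> 0 <= p.@[r].
Proof.
move=> hp hr; rewrite mevalE sumr_ge0 // => m _.
rewrite mulr_ge0 //; first by apply: natr_ge0; exact: hp.
by rewrite prodr_ge0 // => i _; rewrite exprn_ge0 // ltW.
Qed.

Lemma natcoef_gt0 p r : natcoef p -> p != 0 -> pospt r -> 0 < p.@[r].
Proof.
move=> hp p0 hr; rewrite mevalE.
have : mpoly.msupp p != [::] by rewrite mpoly.msupp_eq0.
case E: (mpoly.msupp p) => [|m s] // _.
rewrite big_cons ltr_wpDr //.
  rewrite sumr_ge0 // => m' _; rewrite mulr_ge0 //; first by apply: natr_ge0; exact: hp.
  by rewrite prodr_ge0 // => i _; rewrite exprn_ge0 // ltW.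
rewrite mulr_gt0 //; last by rewrite prodr_gt0 // => i _; rewrite exprn_gt0.
have hm : m \in mpoly.msupp p by rewrite E mem_head.
by rewrite natr_gt0 -?mpoly.mcoeff_msupp //; exact: hp.
Qed.

Definition evQ r f : rat :=
  if excluded_middle_informative (subtraction_free f) is left H then
    let (p, Hq) := constructive_indefinite_description _ H in
    let (q, _) := constructive_indefinite_description _ Hq in
    p.@[r] / q.@[r]
  else 0.

Lemma frac_eq_cross p q p' q' : q != 0 -> q' != 0 ->
  p%:F / q%:F = p'%:F / q'%:F -> p * q' = p' * q.
Proof.
move=> q0 q'0 /eqP; rewrite eqr_div ?tofrac_eq0 // -!tofracM tofrac_eq.
by move/eqP.
Qed.

Lemma evQ_rep r f p q : pospt r -> natcoef p -> natcoef q -> p != 0 -> q != 0 ->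
  f = p%:F / q%:F -> evQ r f = p.@[r] / q.@[r].
Proof.
move=> hr hp hq p0 q0 ef; rewrite /evQ.
case: excluded_middle_informative => H; last first.
  by exfalso; apply: H; exists p, q; split.
case: constructive_indefinite_description => p1 Hq1.
case: constructive_indefinite_description => q1 [hp1 hq1 p10 q10 ef1].
have e : p1 * q = p * q1 by apply: frac_eq_cross => //; rewrite -ef1 -ef.
apply/eqP; rewrite eqr_div; last 2 first.
- by rewrite gt_eqF // natcoef_gt0.
- by rewrite gt_eqF // natcoef_gt0.
by rewrite -!mevalM e.
Qed.

Lemma sf_rep f : is_sf f -> exists p q, [/\ natcoef p, natcoef q, p != 0, q != 0 & f = p%:F / q%:F].
Proof. by move/is_sfP. Qed.

Lemma evQ_gt0 r f : pospt r -> is_sf f -> 0 < evQ r f.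
Proof.
move=> hr /sf_rep [p [q [hp hq p0 q0 ef]]].
by rewrite (evQ_rep hr hp hq p0 q0 ef) divr_gt0 // natcoef_gt0.
Qed.

Lemma evQM r f g : pospt r -> is_sf f -> is_sf g -> evQ r (f * g) = evQ r f * evQ r g.
Proof.
move=> hr /sf_rep [p [q [hp hq p0 q0 ef]]] /sf_rep [p' [q' [hp' hq' p0' q0' eg]]].
rewrite (evQ_rep hr hp hq p0 q0 ef) (evQ_rep hr hp' hq' p0' q0' eg).
rewrite (@evQ_rep r _ (p * p') (q * q')) ?mulf_neq0 //; try exact: natcoefM.
  by rewrite !mevalM mulf_div.
by rewrite ef eg !tofracM mulf_div.
Qed.

Lemma evQV r f : pospt r -> is_sf f -> evQ r f^-1 = (evQ r f)^-1.
Proof.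
move=> hr /sf_rep [p [q [hp hq p0 q0 ef]]].
rewrite (evQ_rep hr hp hq p0 q0 ef) (@evQ_rep r _ q p) //; first by rewrite invf_div.
by rewrite ef invf_div.
Qed.

Lemma natcoefD p q : natcoef p -> natcoef q -> natcoef (p + q).
Proof. by move=> hp hq m; rewrite mpoly.mcoeffD rpredD. Qed.

Definition one_pt : 'I_n -> rat := fun _ => 1.
Lemma one_pt_pos : pospt one_pt. Proof. by move=> i; rewrite /one_pt ltr01. Qed.

Lemma natcoefD_neq0 p q : natcoef p -> natcoef q -> p != 0 -> p + q != 0.
Proof.
move=> hp hq p0; apply/eqP => e.
have h1 := natcoef_gt0 hp p0 one_pt_pos; have h2 := natcoef_ge0 hq one_pt_pos.
have : (p + q).@[one_pt] = 0 by rewrite e meval0.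
by rewrite mevalD => h; move: (ltr_wpDr h2 h1); rewrite h ltxx.
Qed.

Lemma sfD1 f : is_sf f -> is_sf (1 + f).
Proof.
move=> /sf_rep [p [q [hp hq p0 q0 ef]]]; apply/is_sfP.
exists (q + p), q; split => //; first exact: natcoefD.
  by rewrite addrC natcoefD_neq0.
by rewrite ef tofracD mulrDl divff ?tofrac_eq0.
Qed.

Lemma evQD1 r f : pospt r -> is_sf f -> evQ r (1 + f) = 1 + evQ r f.
Proof.
move=> hr /sf_rep [p [q [hp hq p0 q0 ef]]].
rewrite (evQ_rep hr hp hq p0 q0 ef) (@evQ_rep r _ (q + p) q) //.
- by rewrite mevalD mulrDl divff // gt_eqF // natcoef_gt0.
- exact: natcoefD.
- by rewrite addrC natcoefD_neq0.
- by rewrite ef tofracD mulrDl divff ?tofrac_eq0.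
Qed.

Lemma sfV f : is_sf f -> is_sf f^-1.
Proof.
move=> /sf_rep [p [q [hp hq p0 q0 ef]]]; apply/is_sfP.
by exists q, p; split => //; rewrite ef invf_div.
Qed.

Lemma sfXn f k : is_sf f -> is_sf (f ^+ k).
Proof.
move=> hf; elim: k => [|k ih]; first by rewrite expr0 sf1.
by rewrite exprS sfM.
Qed.

Lemma sfXz f (z : int) : is_sf f -> is_sf (f ^ z).
Proof.
move=> hf; case: z => k; first by rewrite -exprnP sfXn.
by rewrite NegzE -exprnN sfV // sfXn.
Qed.

Lemma evQ1 r : pospt r -> evQ r 1 = 1.
Proof.
move=> hr; rewrite (@evQ_rep r _ 1 1) //; try exact: natcoef1; try exact: oner_neq0.
  by rewrite meval1 divr1.
by rewrite tofrac1 divr1.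
Qed.

Lemma evQXn r f k : pospt r -> is_sf f -> evQ r (f ^+ k) = evQ r f ^+ k.
Proof.
move=> hr hf; elim: k => [|k ih]; first by rewrite !expr0 evQ1.
by rewrite !exprS evQM ?sfXn // ih.
Qed.

Lemma evQXz r f (z : int) : pospt r -> is_sf f -> evQ r (f ^ z) = evQ r f ^ z.
Proof.
move=> hr hf; case: z => k; first by rewrite -!exprnP evQXn.
by rewrite !NegzE -!exprnN evQV ?sfXn // evQXn.
Qed.

Lemma evQX r (i : 'I_n) : pospt r -> evQ r ((mpoly.mpolyX rat U_(i)%MM)%:F) = r i.
Proof.
move=> hr; rewrite (@evQ_rep r _ (mpoly.mpolyX rat U_(i)%MM) 1) //; try exact: natcoef1; try exact: oner_neq0.
- by rewrite meval1 divr1 mevalXU.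
- by move=> m; rewrite mpoly.mcoeffX natr_nat.
- by apply/eqP => /(congr1 (mpoly.mcoeff U_(i)%MM)); rewrite mpoly.mcoeffX eqxx mpoly.mcoeff0 => /eqP; rewrite oner_eq0.
- by rewrite tofrac1 divr1.
Qed.

End Eval.

End E.
Import E.

Module K.
Local Open Scope ring_scope.

Lemma digits_inj (D : nat) : (0 < D)%N -> forall n (f g : 'I_n -> nat),
  (forall i, f i < D)%N -> (forall i, g i < D)%N ->
  (\sum_(i < n) f i * D ^ i = \sum_(i < n) g i * D ^ i)%N -> forall i, f i = g i.
Proof.
move=> D0; elim=> [|n ih] f g hf hg; first by move=> _ [].
rewrite !big_ord_recl /= !expn0 !muln1.
under eq_bigr do rewrite /bump /= expnS mulnCA.
under [X in _ = (_ + X)%N]eq_bigr do rewrite /bump /= expnS mulnCA.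
rewrite -!big_distrr /= => e.
have e0 : f ord0 = g ord0.
  have := congr1 (modn^~ D) e; rewrite /= -modnDmr -[in RHS]modnDmr !modnMr !addn0.
  by rewrite !modn_small.
move: e; rewrite e0 => /addnI /eqP; rewrite eqn_mul2l gtn_eqF //= => /eqP e.
have ih' := ih (fun i => f (lift ord0 i)) (fun i => g (lift ord0 i)) (fun i => hf _) (fun i => hg _) e.
move=> i; case: (unliftP ord0 i) => [j ->|->] //; exact: ih'.
Qed.

Lemma mpoly_nonvanish n (h : mpoly.mpoly n rat) : h != 0 ->
  exists r, pospt r /\ h.@[r] != 0.
Proof.
move=> h0.
set D := mpoly.msize h.
have D0 : (0 < D)%N by rewrite lt0n mpoly.msize_poly_eq0.
pose kap := fun m : 'X_{1..n} => (\sum_(i < n) m i * D ^ i)%N.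
have kinj : {in mpoly.msupp h &, injective kap}.
  move=> m m' hm hm' e; apply/mnmP => i; apply: (digits_inj D0 _ _ e) => j.
  - apply: leq_ltn_trans (mpoly.msize_mdeg_lt hm); rewrite mpoly.mdegE (bigD1 j) //=; exact: leq_addr.
  - apply: leq_ltn_trans (mpoly.msize_mdeg_lt hm'); rewrite mpoly.mdegE (bigD1 j) //=; exact: leq_addr.
pose U : {poly rat} := \sum_(m <- mpoly.msupp h) h@_m *: 'X^(kap m).
have U0 : U != 0.
  have : mpoly.msupp h != [::] by rewrite mpoly.msupp_eq0.
  case E: (mpoly.msupp h) => [|m0 s] // _.
  have hm0 : m0 \in mpoly.msupp h by rewrite E mem_head.
  apply/eqP => /(congr1 (fun p : {poly rat} => p`_(kap m0))).
  rewrite /U coef_sum (bigD1_seq m0) ?mpoly.msupp_uniq //= big1_seq; last first.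
    move=> m /andP[nm hm]; rewrite coefZ coefXn.
    case: eqP => [e|]; last by rewrite mulr0.
    by move: nm; rewrite (kinj _ _ hm0 hm e) eqxx.
  rewrite coefZ coefXn eqxx mulr1 addr0 coef0 => /eqP.
  by rewrite mpoly.mcoeff_eq0 hm0.
have hev : forall t : rat, h.@[fun i => t ^+ (D ^ i)] = U.[t].
  move=> t; rewrite mevalE /U horner_sum; apply: eq_bigr => m _.
  rewrite hornerZ hornerXn; congr (_ * _).
  under eq_bigr do rewrite -exprM.
  by rewrite prodrXr /kap; congr (_ ^+ _); apply: eq_bigr => i _; rewrite mulnC.
have : ~~ all (root U) [seq (i.+1)%:R : rat | i <- iota 0 (size U)].
  apply/negP => hall.
  suff hu : uniq [seq (i.+1)%:R : rat | i <- iota 0 (size U)].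
    by have := max_poly_roots U0 hall hu; rewrite size_map size_iota ltnn.
  rewrite map_inj_uniq ?iota_uniq // => a b /eqP; rewrite eqr_nat eqSS => /eqP //.
case/allPn => x /mapP [i _ ->] hx.
exists (fun j => (i.+1%:R : rat) ^+ (D ^ j)); split.
  by move=> j; rewrite exprn_gt0 // ltr0Sn.
by rewrite hev.
Qed.

End K.
Import K.

Module T.
Local Open Scope ring_scope.

Section Tree.
Variable n : nat.
Implicit Types (r s : 'I_n -> rat) (B : 'M[int]_n).

Definition nmut (k : 'I_n) s B : 'I_n -> rat :=
  fun i => if i == k then (s k)^-1
           else s i * (s k) ^ posi (B k i) * (1 + s k) ^ (- B k i).

Lemma posiE (b : int) : posi (- b) - posi b + b = 0.
Proof.
rewrite /posi /=; case: (lerP 0 b) => hb.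
  by rewrite max_r ?oppr_le0 // sub0r addNr.
by rewrite max_l ?oppr_ge0 ?ltW // oppr0 subr0 addNr.
Qed.

Lemma nmut_pos k s B : pospt s -> pospt (nmut k s B).
Proof.
move=> hs i; rewrite /nmut; case: eqP => _; first by rewrite invr_gt0.
by rewrite !mulr_gt0 ?exprz_gt0 ?addr_gt0.
Qed.

Lemma nmutK k s B B' : pospt s -> (forall i, B' k i = - B k i) ->
  forall i, nmut k (nmut k s B') B i = s i.
Proof.
move=> hs hB i; rewrite /nmut eqxx.
case: eqP => [->|/eqP ik]; first by rewrite invrK.
rewrite hB opprK.
set a := s k; have a0 : a != 0 by rewrite gt_eqF ?hs.
have c0 : 1 + a != 0 by rewrite gt_eqF // addr_gt0 ?hs.
have e : 1 + a^-1 = (1 + a) * a^-1 by rewrite mulrDl mul1r divff // addrC.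
rewrite e expfzMl !exprz_inv opprK.
set b := B k i.
have -> : s i * a ^ posi (- b) * (1 + a) ^ b * a ^ (- posi b) * ((1 + a) ^ (- b) * a ^ b)
   = s i * (a ^ posi (- b) * a ^ (- posi b) * a ^ b) * ((1 + a) ^ b * (1 + a) ^ (- b)) by ring.
by rewrite -!expfzDr // posiE addrN !expr0z !mulr1.
Qed.


Definition evP r (u : Qsf n) : rat := evQ r (val u).

Lemma evP_gt0 r u : pospt r -> 0 < evP r u.
Proof. by move=> hr; apply: evQ_gt0 => //; exact: valP. Qed.

Lemma val_toSf (f : Qy n) : is_sf f -> val (toSf f) = f.
Proof. by move=> hf; rewrite /toSf val_insubd hf. Qed.

Lemma evP_mut r k (y : 'I_n -> Qsf n) B : pospt r ->
  forall i, evP r (mut_y k y B i) = nmut k (fun j => evP r (y j)) B i.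
Proof.
move=> hr i; rewrite /evP /mut_y /nmut; case: eqP => _.
  have h := valP (y k).
  by rewrite val_toSf ?sfV // evQV.
have hi := valP (y i); have hk := valP (y k).
rewrite val_toSf; last by rewrite !sfM ?sfXz ?sfD1.
by rewrite !evQM ?sfM ?sfXz ?sfD1 // !evQXz ?sfD1 // evQD1.
Qed.

Lemma reduced_rcons (t : seq 'I_n) k : reduced_word (rcons t k) -> reduced_word t.
Proof.
case: t => // a t; rewrite /reduced_word /= rcons_path => /andP[] //.
Qed.

Lemma surj_ev (S : seq 'I_n -> yseed n) : is_pattern S -> free_coeffs_at_t0 S ->
  forall t, reduced_word t -> forall s, pospt s ->
  exists r, pospt r /\ forall k, evP r (yv (S t) k) = s k.
Proof.
move=> [_ hS] hfree; elim/last_ind => [|t k ih] ht s hs.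
  exists s; split => // k; rewrite hfree /evP /ygen val_toSf ?evQX //.
  apply/is_sfP; exists (mpoly.mpolyX rat U_(k)%MM), 1; split; try exact: natcoef1; try exact: oner_neq0.
  - by move=> m; rewrite mpoly.mcoeffX natr_nat.
  - by apply/eqP => /(congr1 (mpoly.mcoeff U_(k)%MM)); rewrite mpoly.mcoeffX eqxx mpoly.mcoeff0 => /eqP; rewrite oner_eq0.
  - by rewrite tofrac1 divr1.
have [e1 _] := hS t k ht.
have [r [hr hr']] := ih (reduced_rcons ht) (nmut k s (mut_B k (Bm (S t)))) (nmut_pos k (mut_B k (Bm (S t))) hs).
exists r; split => // i; rewrite e1 /= evP_mut //.
rewrite (_ : (fun j => evP r (yv (S t) j)) = nmut k s (mut_B k (Bm (S t)))); last first.
  by apply: functional_extensionality => j; rewrite hr'.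
by rewrite nmutK // => j; rewrite /mut_B mxE eqxx.
Qed.

End Tree.

End T.
Import T.

Module V.
Local Open Scope ring_scope.

Definition vl (l : nat) (q : rat) : int := (logn l `|numq q|)%:Z - (logn l `|denq q|)%:Z.

Lemma vlE l (a b : nat) : (0 < a)%N -> (0 < b)%N ->
  vl l (a%:R / b%:R) = (logn l a)%:Z - (logn l b)%:Z.
Proof.
move=> a0 b0; set q : rat := a%:R / b%:R.
have q0 : 0 < q by rewrite divr_gt0 // ltr0n.
have hq : (a%:Z)%:~R / (b%:Z)%:~R = (numq q)%:~R / (denq q)%:~R :> rat by rewrite divq_num_den.
move/eqP: hq; rewrite eqr_div ?intr_eq0 ?denq_neq0 //; last by rewrite -lt0n.
rewrite -!intrM => /eqP /intr_inj e.
have e' : (a * `|denq q|)%N = (`|numq q| * b)%N.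
  by have := congr1 absz e; rewrite !abszM !absz_nat.
have n0 : (0 < `|numq q|)%N by rewrite absz_gt0 gt_eqF // numq_gt0.
have d0 : (0 < `|denq q|)%N by rewrite absz_gt0 denq_neq0.
have := congr1 (logn l) e'; rewrite !lognM // /vl => h.
lia.
Qed.

Lemma rat_repr (q : rat) : 0 < q -> q = (`|numq q|)%:R / (`|denq q|)%:R.
Proof.
move=> q0.
have hn : 0 <= numq q by rewrite ltW // numq_gt0.
have hd : 0 <= denq q by rewrite ltW // denq_gt0.
by rewrite -{1}(divq_num_den q) !natr_absz !ger0_norm.
Qed.

Lemma numq_abs_gt0 (q : rat) : 0 < q -> (0 < `|numq q|)%N.
Proof. by move=> q0; rewrite absz_gt0 gt_eqF // numq_gt0. Qed.
Lemma denq_abs_gt0 (q : rat) : (0 < `|denq q|)%N.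
Proof. by rewrite absz_gt0 denq_neq0. Qed.

Lemma vlM l (q1 q2 : rat) : 0 < q1 -> 0 < q2 -> vl l (q1 * q2) = vl l q1 + vl l q2.
Proof.
move=> h1 h2.
have -> : vl l q1 = (logn l `|numq q1|)%:Z - (logn l `|denq q1|)%:Z by [].
have -> : vl l q2 = (logn l `|numq q2|)%:Z - (logn l `|denq q2|)%:Z by [].
rewrite {1}(rat_repr h1) {1}(rat_repr h2) mulf_div -!natrM vlE; last 2 first.
- by rewrite muln_gt0 !numq_abs_gt0.
- by rewrite muln_gt0 !denq_abs_gt0.
rewrite !lognM ?numq_abs_gt0 ?denq_abs_gt0 //.
lia.
Qed.

Lemma vl1 l : vl l 1 = 0.
Proof. by rewrite /vl /= logn1 subrr. Qed.

Lemma vl22 : vl 2 2%:R = 1.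
Proof.
rewrite (_ : 2%:R = 2%:R / 1%:R :> rat); last by rewrite divr1.
by rewrite vlE // logn1 subr0.
Qed.

Lemma vl_sep (q : rat) : 0 < q -> q != 1 -> exists l, vl l q != 0.
Proof.
move=> q0 q1.
set a := `|numq q|%N; set b := `|denq q|%N.
have cab : coprime a b := coprime_num_den q.
have a0 : (0 < a)%N := numq_abs_gt0 q0.
have b0 : (0 < b)%N := denq_abs_gt0 q.
have eq : q = a%:R / b%:R := rat_repr q0.
have hab : a != b.
  apply/eqP => e; move: cab; rewrite e /coprime gcdnn => /eqP b1.
  by move: q1; rewrite eq e b1 divr1 eqxx.
case: (ltnP 1 a) => ha.
  exists (pdiv a); rewrite /vl -/a -/b.
  have pa := pdiv_prime ha.
  have -> : logn (pdiv a) b = 0%N.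
    by apply: logn_coprime; apply: coprime_dvdl (pdiv_dvd a) cab.
  have : (0 < logn (pdiv a) a)%N by rewrite logn_gt0 mem_primes pa a0 pdiv_dvd.
  lia.
have a1 : a = 1%N by lia.
have hb : (1 < b)%N by move: hab; rewrite a1; lia.
exists (pdiv b); rewrite /vl -/a -/b a1 logn1.
have : (0 < logn (pdiv b) b)%N by rewrite logn_gt0 mem_primes pdiv_prime // b0 pdiv_dvd.
lia.
Qed.

Section SepP.
Variable n : nat.

Lemma evP_rep r (u : Qsf n) p q : pospt r -> natcoef p -> natcoef q -> p != 0 -> q != 0 ->
  val u = p%:F / q%:F -> evP r u = p.@[r] / q.@[r].
Proof. by move=> *; apply: evQ_rep. Qed.

Lemma P_sep (u1 u2 : Qsf n) : u1 != u2 ->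
  exists r l, pospt r /\ vl l (evP r u1) != vl l (evP r u2).
Proof.
move=> ne.
have [p1 [q1 [hp1 hq1 p10 q10 e1]]] := sf_rep (valP u1).
have [p2 [q2 [hp2 hq2 p20 q20 e2]]] := sf_rep (valP u2).
have h0 : p1 * q2 - p2 * q1 != 0.
  rewrite subr_eq0; apply: contra ne => /eqP e; apply/eqP; apply: val_inj.
  rewrite e1 e2; apply/eqP; rewrite eqr_div ?tofrac_eq0 // -!tofracM tofrac_eq.
  by apply/eqP.
have [r [hr hne]] := mpoly_nonvanish h0.
have ev1 := evP_rep hr hp1 hq1 p10 q10 e1.
have ev2 := evP_rep hr hp2 hq2 p20 q20 e2.
have g1 := evP_gt0 u1 hr; have g2 := evP_gt0 u2 hr.
have nev : evP r u1 != evP r u2.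
  have d1 : q1.@[r] != 0 by rewrite gt_eqF // natcoef_gt0.
  have d2 : q2.@[r] != 0 by rewrite gt_eqF // natcoef_gt0.
  rewrite ev1 ev2 eqr_div //.
  by move: hne; rewrite mevalB !mevalM subr_eq0.
have q0 : 0 < evP r u1 / evP r u2 by rewrite divr_gt0.
have qn1 : evP r u1 / evP r u2 != 1.
  apply: contra nev => /eqP e; apply/eqP.
  by rewrite -[LHS](divfK (negbT (gt_eqF g2))) e mul1r.
have [l hl] := vl_sep q0 qn1.
exists r, l; split => //.
have -> : evP r u1 = evP r u1 / evP r u2 * evP r u2 by rewrite divfK // gt_eqF.
by rewrite vlM // -subr_eq0 addrK.
Qed.

End SepP.

End V.
Import V.

Module R.
Local Open Scope ring_scope.

Section Ring.
Variable n : nat.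
Local Notation P := (Qsf n).
Local Notation M := (P * 'X_{1..n})%type.
Implicit Types (r s : ZPx n) (u v t : M).

Definition mulM u v : M := (sf_mul u.1 v.1, (u.2 + v.2)%MM).
Definition coefZ r u : int := monalg.mcoeff u.1 (mpoly.mcoeff u.2 r : ZP n).
Definition mU (p : P) (c : int) : ZP n := monalg.mkmalgU p c.
Definition Tm (c : int) u : ZPx n := mpoly.mpolyC n (mU u.1 c) * 'X_[u.2].
Definition suppZ r : seq M :=
  flatten [seq [seq (p, m) | p <- (monalg.msupp (mpoly.mcoeff m r : ZP n) : seq P)] | m <- mpoly.msupp r].

Lemma mUM p q c d : mU p c * mU q d = mU (sf_mul p q) (c * d).
Proof. exact: gmulUU. Qed.

Lemma coefZ_Tm c u v : coefZ (Tm c u) v = if u == v then c else 0.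
Proof.
rewrite /coefZ /Tm mpoly.mcoeffCM mpoly.mcoeffX.
case: u v => [p m] [q m'] /=; rewrite xpair_eqE.
case: eqP => [_|_]; rewrite ?andbF ?mulr0 ?mulr1 ?andbT.
  by rewrite /mU monalg.mcoeffU; case: (p =P q) => //= _; rewrite mulr0n.
by rewrite monalg.mcoeff0.
Qed.


Lemma coefZD r s u : coefZ (r + s) u = coefZ r u + coefZ s u.
Proof. by rewrite /coefZ mpoly.mcoeffD monalg.mcoeffD. Qed.

Lemma coefZ0 u : coefZ 0 u = 0.
Proof. by rewrite /coefZ mpoly.mcoeff0 monalg.mcoeff0. Qed.

Lemma coefZ_sum (I : Type) (l : seq I) (F : I -> ZPx n) u :
  coefZ (\sum_(i <- l) F i) u = \sum_(i <- l) coefZ (F i) u.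
Proof. by apply: (big_morph (coefZ^~ u)) => [x y|]; [exact: coefZD|exact: coefZ0]. Qed.

Lemma Tm_mul c d u v : Tm c u * Tm d v = Tm (c * d) (mulM u v).
Proof.
rewrite /Tm mulrACA -mpoly.mpolyXD; congr (_ * _).
by rewrite -mpoly.mpolyCM mUM.
Qed.

Lemma mem_suppZ r u : (u \in suppZ r) = (coefZ r u != 0).
Proof.
case: u => [p m]; rewrite /coefZ /=; apply/flattenP/idP.
  case=> l /mapP [m' hm' ->] /mapP [p' hp' [-> ->]].
  by rewrite monalg.mcoeff_neq0.
move=> h; have hm : m \in mpoly.msupp r.
  rewrite mpoly.mcoeff_msupp; apply: contra h => /eqP ->; by rewrite monalg.mcoeff0.
exists [seq (p0, m) | p0 <- (monalg.msupp (mpoly.mcoeff m r : ZP n) : seq P)].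
  by apply/mapP; exists m.
by apply/mapP; exists p => //; rewrite -monalg.mcoeff_neq0.
Qed.

Lemma uniq_suppZ r : uniq (suppZ r).
Proof.
rewrite /suppZ; elim: (mpoly.msupp r) (mpoly.msupp_uniq r) => //= m l ih /andP[ml ul].
rewrite cat_uniq ih // andbT; apply/andP; split.
  by rewrite map_inj_uniq ?fset_uniq // => x y [].
apply/hasPn => u /flattenP [l' /mapP [m' hm' ->]] /mapP [p hp ->].
apply/mapP => [[p' _ [_ e]]]; by move: hm'; rewrite e (negPf ml).
Qed.

Lemma expandZ r : r = \sum_(u <- suppZ r) Tm (coefZ r u) u.
Proof.
rewrite {1}(mpoly.mpolyE r) /suppZ big_flatten /= big_map; apply: eq_bigr => m _.
rewrite big_map /Tm -mpoly.mul_mpolyC /= -mulr_suml; congr (_ * _).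
rewrite -raddf_sum /=; congr (mpoly.mpolyC n _).
rewrite {1}(monalg.monalgE (mpoly.mcoeff m r : ZP n)) /=.
by apply: eq_bigr => p _.
Qed.

Lemma coefZM r s t : coefZ (r * s) t =
  \sum_(u <- suppZ r) \sum_(v <- suppZ s) (if mulM u v == t then coefZ r u * coefZ s v else 0).
Proof.
rewrite {1}(expandZ r) {1}(expandZ s) mulr_suml coefZ_sum; apply: eq_bigr => u _.
rewrite mulr_sumr coefZ_sum; apply: eq_bigr => v _.
by rewrite Tm_mul coefZ_Tm.
Qed.

End Ring.

End R.
Import R.

Module L.
Local Open Scope ring_scope.

Section Lead.
Variable n : nat.
Local Notation P := (Qsf n).
Local Notation M := (P * 'X_{1..n})%type.
Implicit Types (r s : ZPx n) (u v t : M) (W V : M -> int).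

Definition addM W := forall u v, W (mulM u v) = W u + W v.

Lemma argmax_seq (T : eqType) (l : seq T) (F : T -> int) : l != [::] ->
  exists2 x, x \in l & forall y, y \in l -> F y <= F x.
Proof.
elim: l => // a l ih _; case: (altP (l =P [::])) => [->|ln].
  by exists a; rewrite ?mem_head // => y; rewrite inE => /eqP ->.
have [x xl hx] := ih ln.
case: (lerP (F a) (F x)) => h.
  exists x; first by rewrite inE xl orbT.
  by move=> y; rewrite inE => /orP [/eqP ->|]; [|exact: hx].
exists a; first exact: mem_head.
move=> y; rewrite inE => /orP [/eqP ->|/hx hy] //; exact: (le_trans hy (ltW h)).
Qed.

Lemma suppZ_neq0 r : r != 0 -> suppZ r != [::].
Proof.
move=> r0; apply: contra r0 => /eqP e; rewrite [r]expandZ e big_nil //.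
Qed.

Lemma lead_mul W r s : addM W -> r != 0 -> s != 0 ->
  {in suppZ r &, injective W} -> {in suppZ s &, injective W} ->
  exists ur, exists us, [/\ ur \in suppZ r, us \in suppZ s,
    (forall x, x \in suppZ r -> W x <= W ur), (forall x, x \in suppZ s -> W x <= W us)
    & mulM ur us \in suppZ (r * s)].
Proof.
move=> hW r0 s0 ir iS.
have [ur hur mr] := argmax_seq W (suppZ_neq0 r0).
have [us hus ms] := argmax_seq W (suppZ_neq0 s0).
exists ur, us; split => //.
rewrite mem_suppZ coefZM (bigD1_seq ur) ?uniq_suppZ //=.
rewrite [X in _ + X]big1_seq; last first.
  move=> u /andP [nu hu]; apply: big1_seq => v /andP [_ hv].
  case: eqP => [e|_]; last by [].
  exfalso.
  have := congr1 W e; rewrite !hW => e'.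
  have hu' := mr u hu; have hv' := ms v hv.
  have : W u = W ur.
    apply/eqP; rewrite eq_le hu' /=; rewrite -(lerD2r (W v)) e'.
    by rewrite lerD2l.
  by move/(ir _ _ hu hur) => eu; move: nu; rewrite eu eqxx.
rewrite addr0 (bigD1_seq us hus (uniq_suppZ s)) /=.
rewrite eqxx [X in _ + X]big1_seq; last first.
  move=> v /andP [nv hv]; case: eqP => [e|_]; last by [].
  exfalso.
  have := congr1 W e; rewrite !hW => e'.
  have : W v = W us by apply: (addrI (W ur)).
  by move/(iS _ _ hv hus) => ev; move: nv; rewrite ev eqxx.
rewrite addr0 mulf_neq0 // -mem_suppZ //.
Qed.


Lemma addM_opp W : addM W -> addM (fun u => - W u).
Proof. by move=> hW u v; rewrite hW opprD. Qed.

Lemma width_inj W d e f f1 f2 : addM W -> d != 0 -> e != 0 ->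
  {in suppZ d &, injective W} -> {in suppZ e &, injective W} -> d * e = f ->
  (forall t, t \in suppZ f -> t = f1 \/ t = f2) ->
  forall x y, x \in suppZ d -> y \in suppZ d -> W x - W y <= `|W f1 - W f2|.
Proof.
move=> hW d0 e0 id ie def hf x y hx hy.
have [ud [ue [hud hue mud mue hmax]]] := lead_mul hW d0 e0 id ie.
have hW' := addM_opp hW.
have id' : {in suppZ d &, injective (fun u => - W u)}.
  by move=> a b ha hb /oppr_inj; apply: id.
have ie' : {in suppZ e &, injective (fun u => - W u)}.
  by move=> a b ha hb /oppr_inj; apply: ie.
have [ld [le [hld hle mld mle hmin]]] := lead_mul hW' d0 e0 id' ie'.
rewrite def in hmax hmin.
have h1 := hf _ hmax; have h2 := hf _ hmin.
have a1 := mud x hx; have a2 := mld y hy; have a3 := mue _ hle.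
have a4 : W (mulM ud ue) - W (mulM ld le) <= `|W f1 - W f2|.
  case: h1 => ->; case: h2 => ->; rewrite ?subrr ?normr_ge0 ?ler_norm //.
  by rewrite -normrN opprB ler_norm.
move: a4; rewrite !hW; move: a1 a2 a3; rewrite !lerN2 => a1 a2 a3 a4.
apply: le_trans a4.
move: (W x) (W y) (W ud) (W ue) (W ld) (W le) a1 a2 a3 => ???????? /=.
lia.
Qed.


Lemma nonzero_comb (N d w : int) : `|w| < N -> d != 0 -> N * d + w != 0.
Proof. move=> h1 h2; apply/eqP => h3; move/eqP: h2 => h2. nia. Qed.

Lemma le_sum_norm (T : eqType) (l : seq T) (F : T -> int) x : x \in l ->
  `|F x| <= \sum_(y <- l) `|F y|.
Proof.
move=> hx; rewrite (big_rem x hx) /= lerDl sumr_ge0 // => i _.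
Qed.

Hypothesis Hsep : forall u v : M, u != v -> exists W, addM W /\ W u != W v.

Lemma comb_pairs (ps : seq (M * M)) : (forall pr, pr \in ps -> pr.1 != pr.2) ->
  exists V, addM V /\ forall pr, pr \in ps -> V pr.1 != V pr.2.
Proof.
elim: ps => [|[a b] ps ih] hps.
  by exists (fun _ => 0); split => // u v; rewrite addr0.
have hps2 : forall pr, pr \in ps -> pr.1 != pr.2 by move=> pr h; apply: hps; rewrite inE h orbT.
have [V [hV hVp]] := ih hps2.
case: (altP (V a =P V b)) => eab; last first.
  exists V; split => // pr; rewrite inE => /orP [/eqP -> //|]; exact: hVp.
have [W [hW hWab]] := Hsep (hps _ (mem_head _ _)).
pose N := 1 + \sum_(pr <- ps) `|W pr.1 - W pr.2|.
exists (fun u => N * V u + W u); split.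
  by move=> u v; rewrite hV hW mulrDr addrACA.
move=> pr; rewrite inE => /orP [/eqP -> /=|hpr].
  by rewrite eab; apply: contra hWab => /eqP /addrI ->.
have hN : `|W pr.1 - W pr.2| < N.
  by rewrite /N ltr_pwDl // (le_sum_norm (fun pr => W pr.1 - W pr.2) hpr).
have hd : V pr.1 - V pr.2 != 0 by rewrite subr_eq0 hVp.
have := nonzero_comb hN hd.
have e1 : N * V pr.1 + W pr.1 - (N * V pr.2 + W pr.2) = N * (V pr.1 - V pr.2) + (W pr.1 - W pr.2).
  by rewrite mulrBr opprD addrACA.
by rewrite -e1 subr_eq0.
Qed.

Lemma width W d e f f1 f2 : addM W -> d != 0 -> e != 0 -> d * e = f ->
  (forall t, t \in suppZ f -> t = f1 \/ t = f2) ->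
  forall x y, x \in suppZ d -> y \in suppZ d -> W x - W y <= `|W f1 - W f2|.
Proof.
move=> hW d0 e0 def hf x y hx hy.
pose S := suppZ d ++ suppZ e.
pose ps := [seq pr <- [seq (a, b) | a <- S, b <- S] | pr.1 != pr.2].
have [V [hV hV']] : exists V, addM V /\ forall pr, pr \in ps -> V pr.1 != V pr.2.
  by apply: comb_pairs => pr; rewrite mem_filter => /andP [].
have inps a b : a \in S -> b \in S -> a != b -> (a, b) \in ps.
  by move=> ha hb ab; rewrite mem_filter ab /=; apply/allpairsP; exists (a, b).
pose N := 1 + \sum_(pr <- ps) `|V pr.1 - V pr.2| + `|V f1 - V f2|.
have hN a b : a \in S -> b \in S -> a != b -> `|V a - V b| + `|V f1 - V f2| < N.
  move=> ha hb ab; rewrite /N -addrA ltr_pwDl // lerD2r.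
  exact: (le_sum_norm (fun pr => V pr.1 - V pr.2) (inps _ _ ha hb ab)).
clearbody N.
pose W' := fun u => N * W u + V u.
have hW' : addM W' by move=> u v; rewrite /W' hW hV mulrDr addrACA.
have inj a b : a \in S -> b \in S -> W' a = W' b -> a = b.
  move=> ha hb eW; apply/eqP; apply/negPn/negP => ab.
  have h1 := hN _ _ ha hb ab; have h2 := hV' _ (inps _ _ ha hb ab).
  move: eW h1 h2; rewrite /W' /=.
  have hc : 0 <= `|V f1 - V f2| by [].
  move: (W a) (W b) (V a) (V b) `|V f1 - V f2| hc => wa wb va vb c hc eW h1 h2.
  move/eqP: h2 => h2.
  case: (eqVneq wa wb) => hw; first by subst; lia.
  have h3 : `|va - vb| < N by lia.
  have hw' : wa - wb != 0 by rewrite subr_eq0.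
  have := nonzero_comb h3 hw'; move/eqP; lia.
have hS1 a : a \in suppZ d -> a \in S by move=> h; rewrite mem_cat h.
have hS2 a : a \in suppZ e -> a \in S by move=> h; rewrite mem_cat h orbT.
have injd : {in suppZ d &, injective W'} by move=> a b ha hb; apply: inj; [exact: hS1|exact: hS1].
have inje : {in suppZ e &, injective W'} by move=> a b ha hb; apply: inj; [exact: hS2|exact: hS2].
have hwi := width_inj hW' d0 e0 injd inje def hf hx hy.
case: (eqVneq x y) => [->|xy]; first by rewrite subrr.
have h := hN _ _ (hS1 _ hx) (hS1 _ hy) xy.
move: hwi; rewrite /W'.
have tri : `|N * W f1 + V f1 - (N * W f2 + V f2)| <= N * `|W f1 - W f2| + `|V f1 - V f2|.
  have -> : N * W f1 + V f1 - (N * W f2 + V f2) = N * (W f1 - W f2) + (V f1 - V f2).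
    by rewrite mulrBr opprD addrACA.
  have N0 : 0 <= N by apply: le_trans (ltW h); rewrite addr_ge0.
  by apply: le_trans (ler_normD _ _) _; rewrite normrM (ger0_norm N0).
move: tri h; have hD := ler_norm (V x - V y).
have hD' : - `|V x - V y| <= V x - V y by rewrite lerNl -normrN ler_norm.
have hB : 0 <= `|W f1 - W f2| by []. have hC : 0 <= `|V f1 - V f2| by [].
move: hD hD' hB hC.
move: (W x) (W y) (V x) (V y) `|W f1 - W f2| `|V f1 - V f2| `|V x - V y| `|N * W f1 + V f1 - (N * W f2 + V f2)|.
move=> wx wy vx vy B C E F hD hD' hB hC tri h hwi.
nia.
Qed.

End Lead.

End L.
Import L.

Module G.
Local Open Scope ring_scope.

Section Gen.
Variable n : nat.
Local Notation P := (Qsf n).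
Local Notation M := (P * 'X_{1..n})%type.
Implicit Types (d a : ZPx n) (u v t : M).

Lemma single_supp d : d != 0 -> (forall x y, x \in suppZ d -> y \in suppZ d -> x = y) ->
  exists u, d = Tm (R.coefZ d u) u.
Proof.
move=> d0 h; have := suppZ_neq0 d0.
case E: (suppZ d) => [|u l] // _.
have hu : u \in suppZ d by rewrite E mem_head.
have el : l = [::].
  case: l E => // w l E; have hw : w \in suppZ d by rewrite E !inE eqxx orbT.
  have ew := h _ _ hu hw.
  by have := uniq_suppZ d; rewrite E /= inE -ew eqxx.
exists u; rewrite {1}[d]expandZ E el big_seq1 //.
Qed.

Lemma Tm_mulE c u a : Tm c u * a =
  \sum_(v <- suppZ a) Tm (c * R.coefZ a v) (mulM u v).
Proof.
rewrite {1}[a]expandZ mulr_sumr; apply: eq_bigr => v _; exact: Tm_mul.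
Qed.

Lemma Tm_dvd c u a t : R.coefZ (Tm c u * a) t = 1 ->
  (c = 1 \/ c = -1) /\ exists v, mulM u v = t.
Proof.
rewrite Tm_mulE R.coefZ_sum.
under eq_bigr do rewrite R.coefZ_Tm.
move=> h; split.
  have : c * \sum_(v <- suppZ a) (if mulM u v == t then R.coefZ a v else 0) = 1.
    rewrite -h mulr_sumr; apply: eq_bigr => v _.
    by case: ifP => _; rewrite ?mulr0.
  move: (\sum_(v <- _) _) => X hX.
  have hu : c \is a intUnitRing.unitz by apply: (@intUnitRing.unitzPl c X); rewrite mulrC.
  by move: hu; rewrite qualifE => /orP [/eqP ->|/eqP ->]; [left|right].
case: (boolP (has (fun v => mulM u v == t) (suppZ a))) => [/hasP [v _ /eqP e]|hn].
  by exists v.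
exfalso; move: h; rewrite big1_seq; first by move/eqP; rewrite eq_sym oner_eq0.
move=> v /andP [_ hv]; move/hasPn: hn => /(_ v hv) /negPf ->; by [].
Qed.

End Gen.

End G.
Import G.

Module F.
Local Open Scope ring_scope.

Section Final.
Variable n : nat.
Local Notation P := (Qsf n).
Local Notation M := (P * 'X_{1..n})%type.

Lemma evP_mul r (a b : P) : pospt r -> evP r (sf_mul a b) = evP r a * evP r b.
Proof. by move=> hr; rewrite /evP /= evQM //; [exact: valP|exact: valP]. Qed.

Definition Wv r l : M -> int := fun w => vl l (evP r w.1).

Lemma addM_Wv r l : pospt r -> addM (Wv r l).
Proof.
move=> hr u v; rewrite /Wv /mulM /= evP_mul // vlM //; exact: evP_gt0.
Qed.

Definition Wc (i : 'I_n) : M -> int := fun w => (w.2 i)%:Z.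

Lemma addM_Wc i : addM (Wc i).
Proof. by move=> u v; rewrite /Wc /mulM /= mnmDE PoszD. Qed.

Lemma M_sep (u v : M) : u != v -> exists W, addM W /\ W u != W v.
Proof.
case: u v => [p m] [q m'] /=; rewrite xpair_eqE negb_and => /orP [hpq|hmm].
  have [r [l [hr hl]]] := P_sep hpq.
  by exists (Wv r l); split; [exact: addM_Wv|].
have [i hi] : exists i, m i != m' i.
  apply/existsP; apply: contraR hmm => /existsPn h; apply/eqP/mnmP => i.
  by apply/eqP; move: (h i); rewrite negbK.
by exists (Wc i); split; [exact: addM_Wc|rewrite /Wc /= eqz_nat].
Qed.


Definition alph (s : yseed n) k : P := toSf (val (yv s k) / (1 + val (yv s k))).
Definition bet (s : yseed n) k : P := toSf (1 / (1 + val (yv s k))).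
Definition e1 (s : yseed n) k : M := (alph s k, mono_pos (Bm s) k).
Definition e2 (s : yseed n) k : M := (bet s k, mono_neg (Bm s) k).

Lemma exch_Tm (s : yseed n) k : exch_poly s k = Tm 1 (e1 s k) + Tm 1 (e2 s k).
Proof. reflexivity. Qed.

Lemma coefZ_two (a b t : M) : R.coefZ (Tm 1 a + Tm 1 b) t =
  (if a == t then 1 else 0 : int) + (if b == t then 1 else 0 : int).
Proof.
apply: (etrans (R.coefZD (Tm 1 a) (Tm 1 b) t)).
by congr (_ + _); exact: R.coefZ_Tm.
Qed.

Lemma two_supp (a b t : M) : t \in suppZ (Tm 1 a + Tm 1 b) -> t = a \/ t = b.
Proof.
rewrite mem_suppZ coefZ_two.
case: (eqVneq a t) => [h|h1]; first by move=> _; left.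
case: (eqVneq b t) => [h|h2]; first by move=> _; right.
by rewrite addr0 eqxx.
Qed.

Lemma two_neq0 (a b : M) : Tm 1 a + Tm 1 b != 0.
Proof.
apply/negP => /eqP /(congr1 (fun r : ZPx n => R.coefZ r a)); rewrite /= coefZ_two R.coefZ0 eqxx.
by case: (eqVneq b a) => [h|h] //.
Qed.

Lemma two_coef1 (a b : M) : a != b -> R.coefZ (Tm 1 a + Tm 1 b) a = 1.
Proof.
move=> h; rewrite coefZ_two eqxx.
case: (eqVneq b a) => [e|_]; first by move: h; rewrite e eqxx.
by rewrite addr0.
Qed.

Lemma two_coef2 (a b : M) : a != b -> R.coefZ (Tm 1 a + Tm 1 b) b = 1.
Proof.
move=> h; rewrite coefZ_two eqxx.
case: (eqVneq a b) => [e|_]; first by move: h; rewrite e eqxx.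
by rewrite add0r.
Qed.

Lemma alph_bet (s : yseed n) k : alph s k = sf_mul (bet s k) (yv s k).
Proof.
have hy := valP (yv s k).
have h1 : is_sf (val (yv s k) / (1 + val (yv s k))) := sfM hy (sfV (sfD1 hy)).
have h2 : is_sf (1 / (1 + val (yv s k))) := sfM (sf1 n) (sfV (sfD1 hy)).
apply: val_inj.
change (val (alph s k) = val (bet s k) * val (yv s k)).
rewrite /alph /bet (val_toSf h1) (val_toSf h2).
by rewrite mul1r mulrC.
Qed.

Lemma posn_or (b : int) : posn b = 0%N \/ posn (- b) = 0%N.
Proof. by case: b => [[|m]|m] /=; [left|right|left]. Qed.


Lemma main_coprime (S : seq 'I_n -> yseed n) : is_pattern S -> free_coeffs_at_t0 S ->
  forall t : seq 'I_n, reduced_word t -> coprime_seed (S t).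
Proof.
move=> hpat hfree t ht i j ij d [a ha] [b hb].
move: (S t) ha hb (surj_ev hpat hfree ht) => s ha hb hsurj.
pose sg := fun k : 'I_n => if k == i then (2%:R : rat) else 1.
have sgpos : pospt sg.
  move=> k; rewrite /sg; case: (k == i); [exact: ltr0Sn|exact: ltr01].
have [r [hr hrv]] := hsurj sg sgpos.
have hyi : evP r (yv s i) = 2%:R by rewrite hrv /sg eqxx.
have hyj : evP r (yv s j) = 1 by rewrite hrv /sg eq_sym (negPf ij).
pose Wa := Wv r 2.
have hWa : addM Wa := addM_Wv 2 hr.
have dif k : Wa (e1 s k) - Wa (e2 s k) = vl 2 (evP r (yv s k)).
  rewrite /Wa /Wv /e1 /e2 /=.
  rewrite (alph_bet s k) evP_mul // vlM; last 2 first.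
  - exact: evP_gt0.
  - exact: evP_gt0.
  by rewrite addrC addKr.
have difi : Wa (e1 s i) - Wa (e2 s i) = 1 by rewrite dif hyi vl22.
have difj : Wa (e1 s j) - Wa (e2 s j) = 0 by rewrite dif hyj vl1.
have fE := exch_Tm s i; have gE := exch_Tm s j.
have fn0 : exch_poly s i != 0 by rewrite fE; exact: two_neq0.
have gn0 : exch_poly s j != 0 by rewrite gE; exact: two_neq0.
have d0 : d != 0.
  by apply: contraNneq fn0 => d0; rewrite ha d0 mul0r.
have a0 : a != 0.
  by apply: contraNneq fn0 => a0; rewrite ha a0 mulr0.
have b0 : b != 0.
  by apply: contraNneq gn0 => b0; rewrite hb b0 mulr0.
have suppf : forall t', t' \in suppZ (d * a) -> t' = e1 s i \/ t' = e2 s i.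
  by move=> t'; rewrite -ha fE; exact: two_supp.
have suppg : forall t', t' \in suppZ (d * b) -> t' = e1 s j \/ t' = e2 s j.
  by move=> t'; rewrite -hb gE; exact: two_supp.
have single : forall x y, x \in suppZ d -> y \in suppZ d -> x = y.
  move=> x y hx hy; apply/eqP; apply/negPn/negP => xy.
  have [W0 [hW0 hW0xy]] := M_sep xy.
  have wj1 := width M_sep hWa d0 b0 erefl suppg hx hy.
  have wj2 := width M_sep hWa d0 b0 erefl suppg hy hx.
  rewrite difj normr0 in wj1 wj2.
  have eWa : Wa x = Wa y by lia.
  pose c := W0 (e1 s i) - W0 (e2 s i).
  pose U := fun w => W0 w - c * Wa w.
  have hU : addM U by move=> u v; rewrite /U hW0 hWa mulrDr opprD addrACA.
  have dU : U (e1 s i) - U (e2 s i) = 0.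
    rewrite /U.
    have -> : W0 (e1 s i) - c * Wa (e1 s i) - (W0 (e2 s i) - c * Wa (e2 s i))
      = (W0 (e1 s i) - W0 (e2 s i)) - c * (Wa (e1 s i) - Wa (e2 s i)) by ring.
    by rewrite difi mulr1 /c subrr.
  have u1 := width M_sep hU d0 a0 erefl suppf hx hy.
  have u2 := width M_sep hU d0 a0 erefl suppf hy hx.
  rewrite dU normr0 in u1 u2.
  have : U x = U y by lia.
  rewrite /U eWa => /addIr ex.
  by move: hW0xy; rewrite ex eqxx.
have [u du] := single_supp d0 single.
move: (R.coefZ d u) du => c du.
have e12 : e1 s i != e2 s i.
  by apply/eqP => e; move: difi; rewrite e subrr => /eqP; rewrite eq_sym oner_eq0.
have c1 : R.coefZ (Tm c u * a) (e1 s i) = 1 by rewrite -du -ha fE two_coef1.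
have c2 : R.coefZ (Tm c u * a) (e2 s i) = 1 by rewrite -du -ha fE two_coef2.
have [hc [v1 hv1]] := Tm_dvd c1.
have [_ [v2 hv2]] := Tm_dvd c2.
have u20 : u.2 = 0%MM.
  apply/mnmP => k; rewrite mnm0E.
  have := congr1 (fun w : M => w.2 k) hv1; have := congr1 (fun w : M => w.2 k) hv2.
  rewrite /mulM /e1 /e2 /= !mnmDE /mono_pos /mono_neg !mnmE => h2 h1.
  case: (posn_or (Bm s k i)) => h; lia.
clear c1 c2 hv1 hv2.
case: u du u20 => p m du /= m0.
move: du; rewrite m0 /Tm /= mpoly.mpolyX0 mulr1 => ->.
case: hc => ->.
  by exists false, p; rewrite expr0 mul1r.
exists true, p; rewrite expr1 mulN1r /grp /mU.
by rewrite monalg.monalgUN.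
Qed.

End Final.


End F.
Import F.

Theorem lemma5p4 (n : nat) (S : seq 'I_n -> yseed n) :
  is_pattern S -> free_coeffs_at_t0 S ->
  forall t : seq 'I_n, reduced_word t -> coprime_seed (S t).
Proof. exact: main_coprime. Qed.
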